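(* Let $\mathcal{P}$ be the set of integers $k\ge 2$ such that $T_k(x)=x^k+x+1$ is primitive over $\mathbb{F}_2$. For $k\in\mathcal{P}$, let $U_k$ be the rotation of the cyclic word $M_k$ (defined in the context) that starts with $0^k$, and let $V_k=U_k\,U_k[0..k-2]$. Then $\chi(V_k)/r(V_k)$ approaches $2$ as $k\to\infty$ within $\mathcal{P}$; that is, for every $\varepsilon>0$ there is $k_0$ such that $|\chi(V_k)/r(V_k)-2|<\varepsilon$ for all $k\in\mathcal{P}$ with $k\ge k_0$.
   Context: For $k\in\mathcal{P}$: define $F:\{0,1\}^k\to\{0,1\}^k$ by $F(x_0,\dots,x_{k-1})=(x_1,\dots,x_{k-1},x_0\oplus x_1)$ and let $F'$ agree with $F$ except $F'(0^k)=0^{k-1}1$ and $F'(10^{k-1})=0^k$; $F'$ is a single cycle on all $2^k$ states. Starting from any state $x_0$ with $x_{t+1}=F'(x_t)$, let $w$ be the cyclic word of length $2^k$ with $w[t]$ the first coordinate of $x_t$ (a binary de Bruijn cycle of order $k$); $M_k$ is obtained from $w$ by reversing and complementing every bit. Strings are $0$-indexed. $\$$ is an end-marker smaller than $0,1$, appended once. $r(V)$ is the number of runs (maximal blocks of one repeated symbol) of $\operatorname{BWT}(V\$)$, the last column of the matrix of lexicographically sorted cyclic rotations of $V\$$. For a string $v$, a substring $x$ (possibly empty) is right-maximal if $xa,xb$ are substrings for two distinct symbols $a\neq b$; these $xa$ are the right-extensions. A set $S$ of positions of $v$ is suffixient if every right-extension is a suffix of $v[0..j]$ for some $j\in S$.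 $\chi(V)$ is the minimum size of a suffixient set for $V\$$. *)

(* Defs.v *)
From HB Require Import structures.
From mathcomp Require Import all_boot all_order all_algebra all_field.
Set Implicit Arguments. Unset Strict Implicit. Unset Printing Implicit Defensive.
Import Order.TTheory GRing.Theory Num.Theory.

Definition trinomial (k : nat) : {poly 'F_2} := ('X^k + 'X + 1)%R.

Definition primitive_poly (p : {poly 'F_2}) : Prop :=
  let m := (size p).-1 in
  [/\ irreducible_poly p,
      dvdp p ('X^(2 ^ m - 1) - 1)%R
    & forall n, 0 < n < 2 ^ m - 1 -> ~~ dvdp p ('X^n - 1)%R].

Definition inP (k : nat) : Prop := 2 <= k /\ primitive_poly (trinomial k).

(* bits: 0 = false, 1 = true; states are seqs (x_0, ..., x_{k-1}) *)

Definition Fstate (x : seq bool) : seq bool :=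
  rcons (behead x) (addb (nth false x 0) (nth false x 1)).

Definition Fprime (k : nat) (x : seq bool) : seq bool :=
  if x == nseq k false then rcons (nseq k.-1 false) true
  else if x == true :: nseq k.-1 false then nseq k false
  else Fstate x.

Definition wdB (k : nat) : seq bool :=
  [seq head false (iter t (Fprime k) (nseq k false)) | t <- iota 0 (2 ^ k)].

Definition Mk (k : nat) : seq bool := map negb (rev (wdB k)).

Definition Uk (k : nat) : seq bool :=
  let M := Mk k in
  rot (find (fun i => take k (rot i M) == nseq k false) (iota 0 (size M))) M.

Definition Vk (k : nat) : seq bool := Uk k ++ take k.-1 (Uk k).

(* encoding: $ |-> 0, bit 0 |-> 1, bit 1 |-> 2 *)
Definition sym (b : bool) : nat := (nat_of_bool b).+1.
Definition dollar (V : seq bool) : seq nat := rcons (map sym V) 0.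

Fixpoint lexle (s t : seq nat) : bool :=
  match s, t with
  | [::], _ => true
  | _ :: _, [::] => false
  | a :: s', b :: t' => (a < b) || ((a == b) && lexle s' t')
  end.

Definition bwt (S : seq nat) : seq nat :=
  map (last 0) (sort lexle [seq rot i S | i <- iota 0 (size S)]).

Definition runs (s : seq nat) : nat :=
  count (fun i => (i == 0) || (nth 0 s i.-1 != nth 0 s i)) (iota 0 (size s)).

Definition r (V : seq bool) : nat := runs (bwt (dollar V)).

Definition substrings (v : seq nat) : seq (seq nat) :=
  [seq take l (drop i v) | i <- iota 0 (size v).+1, l <- iota 0 (size v).+1].

(* x is right-maximal in v: xa and xb are substrings for symbols a <> b
   (any such symbols occur in v) *)
Definition right_maximal (v x : seq nat) : bool :=
  [exists a : 'I_(size v), exists b : 'I_(size v),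
     let ca := nth 0 v a in let cb := nth 0 v b in
     [&& ca != cb, infix (rcons x ca) v & infix (rcons x cb) v]].

Definition right_extension (v y : seq nat) : bool :=
  [&& size y > 0, right_maximal v (take (size y).-1 y) & infix y v].

Definition suffixient (v : seq nat) (S : {set 'I_(size v)}) : bool :=
  all (fun y => right_extension v y ==>
                [exists j in S, suffix y (take (nat_of_ord j).+1 v)])
      (substrings v).

Definition chi (V : seq bool) : nat :=
  let v := dollar V in
  \big[minn/size v]_(S : {set 'I_(size v)} | suffixient S) #|S|.

(* Main.v *)
Require Import Defs.
From mathcomp Require Import all_boot all_order all_algebra.
From mathcomp Require Import zify ring lra.
Import Order.TTheory GRing.Theory Num.Theory.
Set Implicit Arguments. Unset Strict Implicit. Unset Printing Implicit Defensive.

Section Shift.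
Variable k : nat.
Hypothesis k2 : 2 <= k.
Variable G : seq bool -> seq bool.
Hypothesis HG : forall y, size y = k -> G y = rcons (behead y) (last false (G y)).

Lemma size_G y : size y = k -> size (G y) = k.
Proof. by move=> sy; rewrite HG // size_rcons size_behead sy; case: k k2 => // ??. Qed.

Lemma size_iterG x t : size x = k -> size (iter t G x) = k.
Proof. by move=> sx; elim: t => //= t IH; rewrite size_G. Qed.

Lemma nth_G y j : size y = k -> j < k.-1 -> nth false (G y) j = nth false y j.+1.
Proof.
move=> sy hj; rewrite HG // nth_rcons size_behead sy hj.
by rewrite nth_behead.
Qed.

Lemma nth_iterG x t j : size x = k -> j < k ->
  nth false (iter t G x) j = head false (iter (t + j) G x).
Proof.
move=> sx; elim: j t => [|j IH] t hj; first by rewrite addn0 nth0.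
rewrite -nth_G; last by lia. 2: by rewrite size_iterG.
rewrite -iterS IH; last by lia.
by rewrite addSnnS.
Qed.

Lemma last_G_nth y : size y = k -> last false (G y) = nth false (G y) k.-1.
Proof.
move=> sy; rewrite HG // last_rcons nth_rcons size_behead sy ltnn eqxx //.
Qed.

End Shift.

Lemma Fstate_shift k y : size y = k -> Fstate y = rcons (behead y) (last false (Fstate y)).
Proof. by rewrite /Fstate last_rcons. Qed.

Lemma Fprime_shift k y : 2 <= k -> size y = k ->
  Fprime k y = rcons (behead y) (last false (Fprime k y)).
Proof.
move=> k2 sy; rewrite /Fprime.
case: eqP => [->|_]; first by rewrite last_rcons; case: (k) k2 => // n _ /=.
case: eqP => [->|_]; last by rewrite /Fstate last_rcons.
case: (k) k2 => // n _ /=.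
by elim: n => //= n ->.
Qed.

Section RingPart.
Local Open Scope ring_scope.

Lemma F2_addb (a b : bool) : ((a (+) b)%B%:R : 'F_2) = a%:R + b%:R.
Proof. by case: a; case: b => //=; apply/eqP. Qed.

Lemma F2_inj (a b : bool) : (a%:R : 'F_2) = b%:R -> a = b.
Proof. by case: a; case: b => // /eqP. Qed.

Section Seq.
Variable s : nat -> 'F_2.

Definition A (q : {poly 'F_2}) t := \sum_(i < size q) q`_i * s (t + i)%N.

Lemma A_ext (q : {poly 'F_2}) t m : (size q <= m)%N -> A q t = \sum_(i < m) q`_i * s (t + i)%N.
Proof.
move=> hm; rewrite /A -!(big_mkord xpredT (fun i => q`_i * s (t + i)%N)).
rewrite (big_cat_nat (leq0n _) hm) /= [X in _ = _ + X]big1_seq ?addr0 //.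
by move=> i /andP[_]; rewrite mem_iota => /andP[h _]; rewrite nth_default // mul0r.
Qed.

Lemma A_add q1 q2 t : A (q1 + q2) t = A q1 t + A q2 t.
Proof.
pose m := maxn (size q1) (size q2).
rewrite (@A_ext _ _ m) ?(leq_trans (size_polyD _ _)) //.
rewrite (@A_ext q1 _ m) ?leq_maxl // (@A_ext q2 _ m) ?leq_maxr // -big_split.
by apply: eq_bigr => i _; rewrite coefD mulrDl.
Qed.

Lemma A_scale c q t : A (c%:P * q) t = c * A q t.
Proof.
rewrite (@A_ext _ _ (size q)) ?(leq_trans (size_polyMleq _ _)) //.
  rewrite /A mulr_sumr; apply: eq_bigr => i _; by rewrite coefCM mulrA.
rewrite size_polyC; case: (c != 0) => //=; rewrite ?add0n //.
by case: (size q).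
Qed.

Lemma A_X q t : A ('X * q) t = A q t.+1.
Proof.
rewrite (@A_ext _ _ (size q).+1); last first.
  by rewrite (leq_trans (size_polyMleq _ _)) // size_polyX.
rewrite big_ord_recl coefXM eqxx mul0r add0r /A.
by apply: eq_bigr => i _; rewrite coefXM /= addnS.
Qed.

Lemma A_0 t : A 0 t = 0.
Proof. by rewrite /A size_poly0 big_ord0. Qed.

Lemma A_1 t : A 1 t = s t.
Proof. by rewrite /A size_poly1 big_ord1 coef1 mul1r addn0. Qed.

Lemma A_Xn n t : A ('X^n) t = s (t + n)%N.
Proof.
elim: n t => [|n IH] t; first by rewrite expr0 A_1 addn0.
by rewrite exprS A_X IH addSnnS.
Qed.

Lemma A_mul m : (forall t, A m t = 0) -> forall v t, A (v * m) t = 0.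
Proof.
move=> hm v; elim/poly_ind: v m hm => [|v c IH] m hm t; first by rewrite mul0r A_0.
rewrite mulrDl A_add A_scale hm mulr0 addr0 -mulrA; apply: IH => t'.
by rewrite A_X.
Qed.

End Seq.

Lemma F2_double (a : 'F_2) : a + a = 0.
Proof. by rewrite -mulr2n -mulr_natr (_ : 2%:R = 0 :> 'F_2) ?mulr0 //; apply/eqP. Qed.

Lemma size_trinomial k : (2 <= k)%N -> size (trinomial k) = k.+1.
Proof.
move=> k2; rewrite /trinomial -addrA -polyC1 size_addl ?size_polyXn ?size_XaddC //.
Qed.

Section Alg.
Variable k : nat.
Hypothesis k2 : (2 <= k)%N.
Hypothesis hp : primitive_poly (trinomial k).
Let N := (2 ^ k - 1)%N.

Definition sq (x : seq bool) t : 'F_2 := (head false (iter t Fstate x))%:R.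

Lemma FS_shift : forall y, size y = k -> Fstate y = rcons (behead y) (last false (Fstate y)).
Proof. by move=> y; apply: Fstate_shift. Qed.

Lemma sq_rec x t : size x = k -> sq x (t + k) = sq x t + sq x t.+1.
Proof.
move=> sx; rewrite /sq.
have -> : (t + k = t.+1 + k.-1)%N by lia.
rewrite -(nth_iterG k2 FS_shift) //; last by lia.
rewrite iterS; set y := iter t Fstate x.
have sy : size y = k by rewrite /y (size_iterG k2 FS_shift).
rewrite {1}/Fstate nth_rcons size_behead sy ltnn eqxx.
rewrite F2_addb; congr (_ + _).
by rewrite -nth0 (nth_G FS_shift) //; lia.
Qed.

Lemma A_tri x t : size x = k -> A (sq x) (trinomial k) t = 0.
Proof.
move=> sx; rewrite /trinomial !A_add A_Xn -(expr1 'X) A_Xn A_1 sq_rec // addn1.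
by rewrite (addrC (_ + _ + _)) !addrA F2_double add0r F2_double.
Qed.

Lemma A_Xn1 x n t : A (sq x) ('X^n - 1) t = sq x (t + n) - sq x t.
Proof.
by rewrite A_add A_Xn -polyC1 -polyCN -[X in A _ X _]mulr1 A_scale A_1 mulN1r.
Qed.

Lemma iter_period x n : size x = k ->
  (iter n Fstate x = x) <-> (forall t, sq x (t + n) = sq x t).
Proof.
move=> sx; split=> [h t|h].
  by rewrite /sq iterD h.
apply: (@eq_from_nth _ false); first by rewrite (size_iterG k2 FS_shift).
move=> j; rewrite (size_iterG k2 FS_shift) // => hj.
rewrite (nth_iterG k2 FS_shift) //.
transitivity (nth false (iter 0 Fstate x) j); last by [].
rewrite (nth_iterG k2 FS_shift) // add0n; apply: F2_inj.
by have := h j; rewrite /sq addnC.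
Qed.

Lemma sizeP : (size (trinomial k)).-1 = k.
Proof. by rewrite size_trinomial. Qed.

Lemma iterN x : size x = k -> iter N Fstate x = x.
Proof.
move=> sx; apply/iter_period => // t.
move: hp; rewrite /primitive_poly /= sizeP => -[_ /dvdpP [v hv] _].
apply/eqP; rewrite -subr_eq0 -A_Xn1 -/N hv; apply/eqP; apply: A_mul => t'.
exact: A_tri.
Qed.

Lemma iter_lt x n : size x = k -> x != nseq k false -> (0 < n < N)%N ->
  iter n Fstate x != x.
Proof.
move=> sx x0 hn; apply/negP => /eqP /(iter_period _ sx) hper.
move: hp; rewrite /primitive_poly /= sizeP => -[[_ irr] _ hno].
set q := ('X^n - 1 : {poly 'F_2}).
have hq : forall t, A (sq x) q t = 0.
  by move=> t; rewrite A_Xn1 hper subrr.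
have [cop|dv] : coprimep (trinomial k) q \/ (trinomial k %| q).
  case: (boolP (size (gcdp (trinomial k) q) == 1%N)) => hg; first by left.
  right; have := irr _ hg (dvdp_gcdl _ _) => /eqp_dvdl <-.
  by rewrite dvdp_gcdr.
  2: by move: (hno n hn); rewrite dv.
have zs : forall t, sq x t = 0.
  move: cop => /Bezout_coprimepP [u hu].
  move: hu; rewrite -size_poly_eq1 => /eqP hu t.
  have := size1_polyC (eq_leq hu); set c := _`_0 => hc.
  have c0 : c != 0.
    apply/eqP => c0; move: hu; by rewrite hc c0 size_poly0.
  have : A (sq x) (c%:P * 1) t = 0.
    have h1 := A_mul (fun t' => A_tri t' sx); have h2 := A_mul hq.
    by rewrite mulr1 -hc A_add h1 h2 addr0.
  by rewrite A_scale A_1 => /eqP; rewrite mulf_eq0 (negPf c0) /= => /eqP.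
move/negP: x0; apply; apply/eqP.
apply: (@eq_from_nth _ false); first by rewrite size_nseq.
move=> j; rewrite sx => hj; rewrite nth_nseq hj.
transitivity (nth false (iter 0 Fstate x) j); first by [].
rewrite (nth_iterG k2 FS_shift) // add0n.
by apply: F2_inj; rewrite -/(sq x j) zs.
Qed.

End Alg.

End RingPart.

Fixpoint bits (n m : nat) : seq bool :=
  if n is n'.+1 then rcons (bits n' m./2) (odd m) else [::].

Definition num (y : seq bool) : nat := foldl (fun a (b : bool) => a.*2 + b) 0 y.

Lemma size_bits n m : size (bits n m) = n.
Proof. by elim: n m => //= n IH m; rewrite size_rcons IH. Qed.

Lemma num_rcons y b : num (rcons y b) = (num y).*2 + b.
Proof. by rewrite /num -cats1 foldl_cat. Qed.

Lemma num_bits n m : m < 2 ^ n -> num (bits n m) = m.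
Proof.
elim: n m => [|n IH] m /=; first by case: m.
move=> hm; rewrite num_rcons IH; first by rewrite -{3}(odd_double_half m) addnC.
rewrite expnS in hm; rewrite -divn2 ltn_divLR //; lia.
Qed.

Lemma bits_num y : bits (size y) (num y) = y.
Proof.
elim/last_ind: y => //= y b IH.
rewrite size_rcons /= num_rcons.
have -> : ((num y).*2 + b)./2 = num y by rewrite -divn2; case: b; rewrite /= ?addn0 ?addn1 -?muln2 ?divnMr //; lia.
by rewrite IH oddD odd_double /=; case: b.
Qed.

Lemma num_lt y : num y < 2 ^ size y.
Proof.
elim/last_ind: y => //= y b IH.
rewrite num_rcons size_rcons expnS; case: b => /=; lia.
Qed.

Definition enumk k := [seq bits k m | m <- iota 0 (2 ^ k)].

Lemma size_enumk k : size (enumk k) = 2 ^ k.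
Proof. by rewrite size_map size_iota. Qed.

Lemma uniq_enumk k : uniq (enumk k).
Proof.
rewrite map_inj_in_uniq ?iota_uniq // => m m'; rewrite !mem_iota /= !add0n => h1 h2 e.
by rewrite -(num_bits h1) e num_bits.
Qed.

Lemma mem_enumk k y : (y \in enumk k) = (size y == k).
Proof.
apply/idP/idP.
  by case/mapP => m _ ->; rewrite size_bits.
move/eqP=> <-; apply/mapP; exists (num y); last by rewrite bits_num.
by rewrite mem_iota add0n num_lt.
Qed.

Lemma rcons_nseq n (a : bool) : rcons (nseq n a) a = nseq n.+1 a.
Proof. by elim: n => //= n ->. Qed.

Section Orbit.
Variable k : nat.
Hypothesis k2 : 2 <= k.
Hypothesis hp : primitive_poly (trinomial k).
Let N := (2 ^ k - 1)%N.
Let D := 2 ^ k.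
Let z0 := nseq k false.
Let e := rcons (nseq k.-1 false) true.
Let l := true :: nseq k.-1 false.
Definition xs t := iter t (Fprime k) (nseq k false).

Lemma FS_shift' : forall y, size y = k -> Fstate y = rcons (behead y) (last false (Fstate y)).
Proof. by move=> y; apply: Fstate_shift. Qed.
Lemma FP_shift : forall y, size y = k -> Fprime k y = rcons (behead y) (last false (Fprime k y)).
Proof. by move=> y; apply: Fprime_shift. Qed.

Lemma D_gt : k.+1 < D.
Proof.
rewrite /D; elim: k k2 => // n IH; rewrite leq_eqVlt => /orP [/eqP <- //|] h.
rewrite expnS; have := IH h; lia.
Qed.

Lemma N_D : D = N.+1.
Proof. have := D_gt; rewrite /N -/D; lia. Qed.

Lemma size_z0 : size z0 = k. Proof. by rewrite size_nseq. Qed.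
Lemma size_e : size e = k. Proof. rewrite size_rcons size_nseq; lia. Qed.
Lemma size_l : size l = k. Proof. rewrite /= size_nseq; lia. Qed.
Lemma e_nz : e != z0.
Proof. apply/eqP => /(congr1 (fun s => nth false s k.-1)).
rewrite nth_rcons size_nseq ltnn eqxx nth_nseq; case: ifP => //; lia. Qed.
Lemma l_nz : l != z0.
Proof. by rewrite /l /z0; case: (k) k2. Qed.

Lemma F_inj y y' : size y = k -> size y' = k -> Fstate y = Fstate y' -> y = y'.
Proof.
move=> sy sy'; rewrite /Fstate => /rcons_inj [hb hc].
case: y sy hb hc => [|a y] sy; first by move: sy k2 => <-.
case: y' sy' => [|a' y'] sy'; first by move: sy' k2 => <-.
move=> /= hb; subst y'; case: y sy sy' => [|c y] /= sy; first by move: sy k2 => <-.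
by move=> _; case: a; case: a'; case: c.
Qed.

Lemma iterF_inj i y y' : size y = k -> size y' = k -> iter i Fstate y = iter i Fstate y' -> y = y'.
Proof.
move=> sy sy'; elim: i => //= i IH h; apply: IH.
by apply: F_inj => //; rewrite (size_iterG k2 FS_shift').
Qed.

Lemma F_z0 : Fstate z0 = z0.
Proof. rewrite /z0 /Fstate !nth_nseq; case: (k) k2 => // n _ /=.
case: ifP => _; by rewrite rcons_nseq. Qed.

Lemma iterF_z0 m : iter m Fstate z0 = z0.
Proof. by elim: m => //= m ->; exact: F_z0. Qed.

Lemma F_l : Fstate l = e.
Proof. by rewrite /l /e /Fstate /= nth_nseq; case: (k) k2 => // [[|n]] //. Qed.

Lemma iterFe_nz m : iter m Fstate e != z0.
Proof.
apply/negP => /eqP h; move/negP: e_nz; apply; apply/eqP.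
apply: (@iterF_inj m); rewrite ?size_e ?size_z0 //.
by rewrite h iterF_z0.
Qed.

Lemma FP_z0 : Fprime k z0 = e.
Proof. by rewrite /Fprime eqxx. Qed.

Lemma FP_l : Fprime k l = z0.
Proof. by rewrite /Fprime -/z0 (negPf l_nz) eqxx. Qed.

Lemma FP_gen y : y != z0 -> y != l -> Fprime k y = Fstate y.
Proof. by move=> h1 h2; rewrite /Fprime -/z0 (negPf h1) -/l (negPf h2). Qed.

Lemma xs_pre j : j <= N.-1 -> xs j.+1 = iter j Fstate e.
Proof.
elim: j => [|j IH] hj; first by rewrite /xs /= FP_z0.
rewrite /xs iterS -/(xs j.+1) IH; last by lia.
rewrite FP_gen ?iterFe_nz //.
apply/negP => /eqP h.
have : iter j.+1 Fstate e != e.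
  apply: (iter_lt k2 hp); rewrite ?size_e ?e_nz //.
  by rewrite -/N; lia.
by rewrite iterS h F_l eqxx.
Qed.

Lemma N_gt : 1 <= N.
Proof. have := D_gt; rewrite N_D; lia. Qed.

Lemma xs_N : xs N = l.
Proof.
have hN : N = N.-1.+1 by have := N_gt; lia.
rewrite hN xs_pre //.
apply: (@iterF_inj 1); rewrite ?size_l ?(size_iterG k2 FS_shift') ?size_e //=.
by rewrite F_l -iterS -hN (iterN k2 hp) // size_e.
Qed.

Lemma xs_D : xs D = z0.
Proof. by rewrite N_D /xs iterS -/(xs N) xs_N FP_l. Qed.

Lemma xs_per t : xs (t + D) = xs t.
Proof. by rewrite /xs iterD -/(xs D) xs_D. Qed.

Lemma size_xs t : size (xs t) = k.
Proof. by rewrite (size_iterG k2 FP_shift) // size_nseq. Qed.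

Lemma uniq_xs : uniq [seq xs t | t <- iota 0 D].
Proof.
rewrite map_inj_in_uniq ?iota_uniq //.
have key : forall i j, i < j < D -> xs i = xs j -> False.
  move=> i j hij; case: i hij => [|i] hij.
    have -> : j = j.-1.+1 by lia.
    rewrite xs_pre; last by rewrite N_D in hij; lia.
    by move/esym/eqP; rewrite (negPf (iterFe_nz _)).
  have -> : j = j.-1.+1 by lia.
  rewrite !xs_pre; try by (rewrite N_D in hij; lia).
  have -> : j.-1 = i + (j.-1 - i) by lia.
  rewrite iterD => h.
  have := @iterF_inj i e (iter (j.-1 - i) Fstate e).
  rewrite size_e (size_iterG k2 FS_shift') ?size_e // => /(_ erefl erefl h) h2.
  have : iter (j.-1 - i) Fstate e != e.
    apply: (iter_lt k2 hp); rewrite ?size_e ?e_nz //.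
    by rewrite N_D in hij; rewrite -/N; lia.
  by rewrite -h2 eqxx.
move=> i j; rewrite !mem_iota !add0n /= => hi hj h.
case: (ltngtP i j) => // hij; exfalso.
  by apply: (key i j) => //; rewrite hij.
by apply: (key j i) => //; rewrite hij.
Qed.

Lemma mem_xs y : size y = k -> exists2 t, t < D & xs t = y.
Proof.
move=> sy.
have sub : {subset [seq xs t | t <- iota 0 D] <= enumk k}.
  by move=> z /mapP [t _ ->]; rewrite mem_enumk size_xs.
have sz : size (enumk k) <= size [seq xs t | t <- iota 0 D].
  by rewrite size_enumk size_map size_iota.
have [_ eqs] := uniq_min_size uniq_xs sub sz.
have : y \in [seq xs t | t <- iota 0 D] by rewrite eqs mem_enumk sy.
by case/mapP => t; rewrite mem_iota add0n => ht ->; exists t.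
Qed.

End Orbit.

Section CW.
Variable T : eqType.
Definition cw m (s : seq T) t := take m (rot t s).
Definition cws m (s : seq T) := [seq cw m s t | t <- iota 0 (size s)].

Lemma cws_rot m s q y : q <= size s -> y \in cws m (rot q s) -> y \in cws m s.
Proof.
move=> hq /mapP [t]; rewrite mem_iota add0n size_rot => ht ->.
rewrite /cw rot_add_mod ?(ltnW ht) //.
apply/mapP; case: (ltngtP (t + q) (size s)) => h.
- by exists (t + q); rewrite ?mem_iota ?add0n.
- by exists (t + q - size s); first by rewrite mem_iota add0n; lia.
- exists 0; first by rewrite mem_iota; lia.
  by rewrite /cw h rot_size rot0.
Qed.

Lemma cws_rot' m s q y : q <= size s -> y \in cws m s -> y \in cws m (rot q s).
Proof.
move=> hq hy; apply: (@cws_rot _ _ (size s - q)); first by rewrite size_rot leq_subr.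
have -> : rot (size s - q) (rot q s) = s.
  by rewrite -{1}(size_rot q s) -/(rotr q (rot q s)) rotK.
done.
Qed.

Lemma cws_rev m s y : m <= size s -> y \in cws m s -> rev y \in cws m (rev s).
Proof.
move=> hm /mapP [t]; rewrite mem_iota add0n => ht ->.
set n := size s.
have hX : rev (take m (rot t s)) = take m (rot (n - m) (rot (n - t) (rev s))).
  have -> : take m (rot t s) = take (size (rot t s) - (n - m)) (rot t s).
    by rewrite size_rot -/n; congr take; lia.
  rewrite -drop_rev.
  rewrite rev_rot /rotr size_rev -/n.
  set Z := rot (n - t) (rev s).
  have sZ : size Z = n by rewrite size_rot size_rev.
  by rewrite /rot take_size_cat // size_drop sZ; lia.
rewrite /cw hX.
apply: (@cws_rot _ _ (n - t)); first by rewrite size_rev; lia.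
apply: (@cws_rot _ _ (n - m)); first by rewrite size_rot size_rev; lia.
apply/mapP; exists 0; last by rewrite /cw rot0.
by rewrite mem_iota !size_rot size_rev; lia.
Qed.

End CW.

Lemma cws_map (T1 T2 : eqType) (f : T1 -> T2) m s :
  cws m (map f s) = map (map f) (cws m s).
Proof.
by rewrite /cws size_map -map_comp; apply: eq_map => t; rewrite /cw /= map_take map_rot.
Qed.

Section W.
Variable k : nat.
Hypothesis k2 : 2 <= k.
Hypothesis hp : primitive_poly (trinomial k).
Let D := 2 ^ k.
Definition aa t := head false (xs k t).

Lemma FP_shift2 : forall y, size y = k -> Fprime k y = rcons (behead y) (last false (Fprime k y)).
Proof. by move=> y; apply: Fprime_shift. Qed.

Lemma nth_xs t j : j < k -> nth false (xs k t) j = aa (t + j).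
Proof. by move=> hj; rewrite /xs (nth_iterG k2 FP_shift2) // size_nseq. Qed.

Lemma aa_per t : aa (t + D) = aa t.
Proof. by rewrite /aa xs_per. Qed.

Lemma w_def : wdB k = map aa (iota 0 D).
Proof. by []. Qed.

Lemma size_w : size (wdB k) = D.
Proof. by rewrite w_def size_map size_iota. Qed.

Lemma nth_w i : i < D -> nth false (wdB k) i = aa i.
Proof. by move=> hi; rewrite w_def (nth_map 0) ?size_iota // nth_iota. Qed.

Lemma nth_rot_w t j : t < D -> j < D -> nth false (rot t (wdB k)) j = aa (t + j).
Proof.
move=> ht hj; rewrite /rot nth_cat size_drop size_w.
case: ifP => h.
  by rewrite nth_drop nth_w //; lia.
rewrite nth_take; last by lia.
rewrite nth_w; last by lia.
by rewrite -aa_per; congr aa; lia.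
Qed.

Lemma cw_w t m : t < D -> m <= D -> cw m (wdB k) t = mkseq (fun j => aa (t + j)) m.
Proof.
move=> ht hm; apply: (@eq_from_nth _ false).
  by rewrite size_take size_rot size_w size_mkseq; case: ltngtP hm => //; lia.
move=> j; rewrite size_take size_rot size_w => hj.
have hjm : j < m by move: hj; case: ifP => //; lia.
by rewrite nth_take // nth_rot_w ?nth_mkseq //; lia.
Qed.

Lemma D_gt2 : k.+1 < D.
Proof. exact: D_gt. Qed.

Lemma cw_w_k t : t < D -> cw k (wdB k) t = xs k t.
Proof.
move=> ht; rewrite cw_w //; last by have := D_gt2; lia.
apply: (@eq_from_nth _ false); first by rewrite size_mkseq size_xs.
by move=> j; rewrite size_mkseq => hj; rewrite nth_mkseq // nth_xs.
Qed.

Lemma cw_w_k1 t : t < D -> cw k.+1 (wdB k) t = rcons (xs k t) (last false (Fprime k (xs k t))).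
Proof.
move=> ht; rewrite cw_w //; last by have := D_gt2; lia.
apply: (@eq_from_nth _ false); first by rewrite size_mkseq size_rcons size_xs.
move=> j; rewrite size_mkseq => hj; rewrite nth_mkseq // nth_rcons size_xs.
case: (ltngtP j k) => h; first by rewrite nth_xs.
  by exfalso; lia.
subst j; rewrite (last_G_nth FP_shift2) ?size_xs // -iterS -/(xs k t.+1) nth_xs; last by lia.
by congr aa; lia. all: try lia.
Qed.

Lemma Mk_def : Mk k = map negb (rev (wdB k)).
Proof. by []. Qed.

Lemma size_M : size (Mk k) = D.
Proof. by rewrite Mk_def size_map size_rev size_w. Qed.

Lemma M_all z : size z = k -> z \in cws k (Mk k).
Proof.
move=> sz; have sz' : size (rev (map negb z)) = k by rewrite size_rev size_map.
have [t ht hx] := mem_xs k2 hp sz'.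
have h1 : xs k t \in cws k (wdB k).
  by rewrite -cw_w_k //; apply/mapP; exists t; rewrite // mem_iota size_w.
have := cws_rev _ h1; rewrite size_w => /(_ (ltnW (ltnW D_gt2))).
rewrite Mk_def cws_map => h2; apply/mapP; exists (rev (xs k t)) => //.
by rewrite hx revK mapK //; exact: negbK.
Qed.

Definition Gp (z : seq bool) := ~~ last false (Fprime k (rev (map negb z))).

Lemma M_pred Y : Y \in cws k.+1 (Mk k) ->
  exists y, size y = k /\ Y = ~~ last false (Fprime k y) :: map negb (rev y).
Proof.
rewrite Mk_def cws_map => /mapP [Y' hY' ->].
have := cws_rev _ hY'; rewrite size_rev size_w revK => /(_ (ltnW D_gt2)).
case/mapP => t; rewrite mem_iota size_w add0n => ht; rewrite cw_w_k1 // => h.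
exists (xs k t); split; first exact: size_xs.
by rewrite -[Y']revK h rev_rcons.
Qed.

End W.

Section UV.
Variable k : nat.
Hypothesis k2 : 2 <= k.
Hypothesis hp : primitive_poly (trinomial k).
Let D := 2 ^ k.
Let M := Mk k.
Let P := (fun i => take k (rot i M) == nseq k false).
Let q := find P (iota 0 (size M)).

Lemma hasP0 : has P (iota 0 (size M)).
Proof.
have := M_all k2 hp (size_nseq k false); case/mapP => t ht e.
by apply/hasP; exists t => //; rewrite /P -/(cw k M t) -e.
Qed.

Lemma q_lt : q < D.
Proof. by have := hasP0; rewrite has_find size_iota -/q /M size_M. Qed.

Lemma U_def : Uk k = rot q M.
Proof. by []. Qed.

Lemma size_U : size (Uk k) = D.
Proof. by rewrite U_def size_rot /M size_M. Qed.

Lemma U_take : take k (Uk k) = nseq k false.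
Proof.
have := nth_find 0 hasP0; rewrite -/q nth_iota; last by rewrite /M size_M q_lt.
by rewrite add0n => /eqP.
Qed.

Lemma U_all z : size z = k -> z \in cws k (Uk k).
Proof. by move=> sz; rewrite U_def; apply: cws_rot'; rewrite /M ?size_M ?(ltnW q_lt) ?M_all. Qed.

Lemma U_pred Y : Y \in cws k.+1 (Uk k) ->
  exists y, size y = k /\ Y = ~~ last false (Fprime k y) :: map negb (rev y).
Proof.
by rewrite U_def => h; apply: M_pred => //; apply: cws_rot h; rewrite /M size_M ltnW ?q_lt.
Qed.

Lemma V_def : Vk k = Uk k ++ take k.-1 (Uk k).
Proof. by []. Qed.

Lemma kD : k.+1 < D.
Proof. exact: D_gt. Qed.

Lemma size_V : size (Vk k) = D + k.-1.
Proof. rewrite V_def size_cat size_take size_U; have := kD; case: ifP; lia. Qed.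

Lemma V_win i m : i < D -> i + m <= D + k.-1 -> m <= D -> take m (drop i (Vk k)) = cw m (Uk k) i.
Proof.
move=> hi hm hmD; rewrite V_def /cw.
move: (Uk k) size_U => U sU.
rewrite [rot i U]/rot drop_cat sU hi !take_cat size_drop sU.
case: ifP => // hh.
rewrite take_takel; last by lia.
by rewrite take_takel //; lia.
Qed.

Lemma V_wins : [seq take k (drop i (Vk k)) | i <- iota 0 D] = cws k (Uk k).
Proof.
rewrite /cws size_U; apply/eq_in_map => i; rewrite mem_iota add0n => /andP [_ hi].
by apply: V_win => //; have := kD; lia.
Qed.

Lemma V_pred i : 0 < i < D -> nth false (Vk k) i.-1 = Gp k (take k (drop i (Vk k))).
Proof.
move=> /andP [i0 hi].
have hY : take k.+1 (drop i.-1 (Vk k)) \in cws k.+1 (Uk k).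
  rewrite V_win; [|lia|lia|have := kD; lia]; apply/mapP; exists i.-1 => //.
  by rewrite mem_iota size_U; lia.
have [y [sy hy]] := U_pred hY.
have hd : drop i (Vk k) = drop 1 (drop i.-1 (Vk k)) by rewrite drop_drop; congr drop; lia.
move: hy; rewrite hd; case E: (drop i.-1 (Vk k)) => [|c r].
  by move: E; move/(congr1 size); rewrite size_drop size_V /=; lia.
move=> /= [hc hr].
have -> : nth false (Vk k) i.-1 = c.
  by rewrite -[i.-1]addn0 -nth_drop E.
rewrite drop0 hr /Gp mapK ?revK; last exact: negbK.
by rewrite hc.
Qed.

Lemma V_drop : drop D (Vk k) = nseq k.-1 false.
Proof.
rewrite V_def -size_U drop_size_cat // -(take_takel _ (leq_pred k)) U_take take_nseq //.
exact: leq_pred.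
Qed.

Lemma V_take : take k (Vk k) = nseq k false.
Proof. by rewrite V_def take_cat size_U (ltn_trans (ltnSn k) kD) U_take. Qed.

End UV.

Definition Gi k (z : seq bool) := ~~ (nth false z k.-2 (+) nth false z k.-1).

Lemma Gp_gen k z : 2 <= k -> size z = k -> z != nseq k true ->
  z != rcons (nseq k.-1 true) false -> Gp k z = Gi k z.
Proof.
move=> k2 sz h1 h2; rewrite /Gp /Gi.
set y := rev (map negb z).
have sy : size y = k by rewrite size_rev size_map.
have zy : z = map negb (rev y) by rewrite /y revK mapK //; exact: negbK.
rewrite FP_gen //.
- rewrite /Fstate last_rcons !nth_rev ?size_map ?sz; try lia.
  rewrite !(nth_map false) ?sz; try lia.
  have -> : k - 1 = k.-1 by lia.
  have -> : k - 2 = k.-2 by lia.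
  by case: (nth false z k.-1); case: (nth false z k.-2).
- apply: contraNN h1 => /eqP e; apply/eqP; rewrite zy e rev_nseq.
  by elim: (k) => //= n ->.
- apply: contraNN h2 => /eqP e; apply/eqP; rewrite zy e /=.
  rewrite rev_cons rev_nseq map_rcons /=; congr rcons.
  by elim: (k.-1) => //= n ->.
Qed.

Lemma lexle_total : total lexle.
Proof.
elim=> [|a s IH] [|b t] //=.
by case: (ltngtP a b) => h //=; apply: IH.
Qed.

Lemma lexle_trans : transitive lexle.
Proof.
elim=> [|b t IH] [|a s] [|c u] //=.
case/orP => [h1|/andP [/eqP e1 h1]]; case/orP => [h2|/andP [/eqP e2 h2]].
- by rewrite (ltn_trans h1 h2).
- by rewrite -e2 h1.
- by rewrite e1 h2.
- by rewrite e1 e2 eqxx (IH _ _ h1 h2) orbT.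
Qed.

Lemma lexle_anti : antisymmetric lexle.
Proof.
elim=> [|a s IH] [|b t] //=.
case/andP => /orP [h1|/andP [/eqP e1 h1]] /orP [h2|/andP [/eqP e2 h2]].
- by have := ltn_trans h1 h2; rewrite ltnn.
- by move: h1; rewrite e2 ltnn.
- by move: h2; rewrite e1 ltnn.
- by rewrite e1 (IH t) // h1 h2.
Qed.

Fixpoint lexlt (s t : seq nat) : bool :=
  match s, t with
  | a :: s', b :: t' => (a < b) || ((a == b) && lexlt s' t')
  | _, _ => false
  end.

Lemma lexlt_cat u u' s t : lexlt u u' -> lexle (u ++ s) (u' ++ t).
Proof.
elim: u u' => [|a u IH] [|b u'] //=.
case/orP => [->//|/andP [-> h]]; by rewrite IH ?orbT.
Qed.

Lemma lexlt_rcons u u' a b : size u = size u' -> lexlt u u' -> lexlt (rcons u a) (rcons u' b).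
Proof.
elim: u u' => [|c u IH] [|d u'] //= [e].
by case/orP => [->//|/andP [-> h]]; rewrite IH ?orbT.
Qed.

Lemma lexlt_rcons2 u a b : a < b -> lexlt (rcons u a) (rcons u b).
Proof. by move=> h; elim: u => [|c u IH] /=; rewrite ?h // eqxx IH orbT. Qed.

Lemma lexle_mid u a b s t : a < b -> lexle (u ++ a :: s) (u ++ b :: t).
Proof. by move=> h; elim: u => [|c u IH] /=; rewrite ?h // eqxx IH orbT. Qed.

Lemma bits_lt n m : m.+1 < 2 ^ n -> lexlt (map sym (bits n m)) (map sym (bits n m.+1)).
Proof.
elim: n m => [|n IH] m /=; first by case: m.
move=> hm; rewrite !map_rcons.
case: (boolP (odd m)) => hodd.
- have e : uphalf m = (m./2).+1 by rewrite uphalf_half hodd.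
  rewrite e; apply: lexlt_rcons; first by rewrite !size_map !size_bits.
  apply: IH; rewrite expnS in hm; rewrite -e uphalf_half hodd -divn2.
  move: hm; rewrite -{1}(odd_double_half m) hodd; lia.
- have e : uphalf m = m./2 by rewrite uphalf_half (negbTE hodd).
  by rewrite e /=; apply: lexlt_rcons2.
Qed.

Definition ham (s t : seq nat) := count (fun i => nth 0 s i != nth 0 t i) (iota 0 (size s)).

Lemma count_shift (d : nat -> bool) n :
  count (fun i => (0 < i) && d i.-1) (iota 0 n) <= count d (iota 0 n).
Proof.
case: n => [|n] //.
have hR : count d (iota 0 n) <= count d (iota 0 n.+1).
  by rewrite -addn1 iotaD count_cat leq_addr.
apply: leq_trans hR; rewrite /= add0n (iotaDl 1 0 n) count_map.
by rewrite leq_eqVlt; apply/orP; left; apply/eqP; apply: eq_count => i /=; by [].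
Qed.

Lemma runs_ham s t : size s = size t -> runs s <= runs t + 2 * ham s t.
Proof.
move=> hst; rewrite /runs /ham -hst.
set d := fun i => nth 0 s i != nth 0 t i.
set d' := fun i => (0 < i) && d i.-1.
set Ps := fun i => (i == 0) || (nth 0 s i.-1 != nth 0 s i).
set Pt := fun i => (i == 0) || (nth 0 t i.-1 != nth 0 t i).
have h1 : count Ps (iota 0 (size s)) <= count (predU Pt (predU d d')) (iota 0 (size s)).
  apply: sub_count => i; rewrite /Ps /Pt /d /d' /=.
  case: i => [|i] //=; case: eqP => //= e1; case: eqP => //= e2; case: eqP => //= e3.
  by move=> _; apply/eqP => e4; apply: e1; rewrite e4 e2 e3.
have cU (a b : pred nat) r : count (predU a b) r <= count a r + count b r.
  by rewrite -count_predUI leq_addr.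
have := cU Pt (predU d d') (iota 0 (size s)).
have := cU d d' (iota 0 (size s)).
have h3 : count d' (iota 0 (size s)) <= count d (iota 0 (size s)) := count_shift d (size s).
move=> hA hB; apply: (leq_trans h1); apply: (leq_trans hB); rewrite leq_add2l mul2n -addnn; apply: (leq_trans hA); by rewrite leq_add2l.
Qed.

Lemma ham_sym s t : size s = size t -> ham s t = ham t s.
Proof. by move=> h; rewrite /ham h; apply: eq_count => i /=; rewrite eq_sym. Qed.

Lemma ham_cat a b c d : size a = size c -> ham (a ++ b) (c ++ d) = ham a c + ham b d.
Proof.
move=> hac; rewrite /ham size_cat iotaD count_cat add0n; congr addn.
  apply: eq_in_count => i; rewrite mem_iota add0n /= => hi.
  by rewrite !nth_cat -hac hi.
rewrite -{1}(addn0 (size a)) (iotaDl (size a) 0) count_map; apply: eq_count => i /=.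
by rewrite !nth_cat -hac ltnNge leq_addr /= addKn.
Qed.

Lemma ham_le a c : ham a c <= size a.
Proof. by rewrite /ham (leq_trans (count_size _ _)) // size_iota. Qed.

Lemma ham_map (T : Type) (x0 : T) (f g : T -> nat) (e : seq T) :
  ham (map f e) (map g e) = count (fun z => f z != g z) e.
Proof.
rewrite /ham size_map -[in RHS](mkseq_nth x0 e) /mkseq count_map.
apply: eq_in_count => i; rewrite mem_iota add0n /= => hi.
by rewrite !(nth_map x0).
Qed.

Lemma last_rot (T : Type) (x0 : T) i s : 0 < i <= size s -> last x0 (rot i s) = nth x0 s i.-1.
Proof.
move=> /andP [i0 hi]; rewrite /rot last_cat.
have -> : i = i.-1.+1 by lia.
by rewrite (take_nth x0) ?last_rcons //; lia.
Qed.

Lemma sorted_map_iota (T : Type) (r : rel T) (f : nat -> T) a b :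
  (forall i, a <= i -> i.+1 < a + b -> r (f i) (f i.+1)) -> sorted r (map f (iota a b)).
Proof.
elim: b a => [|b IH] a h //=.
case: b IH h => [|b] IH h //=.
rewrite h; [|lia|lia].
have := IH a.+1; rewrite /= => -> //.
move=> i hi hib; apply: h; lia.
Qed.

Section BWT.
Variable k : nat.
Hypothesis k2 : 2 <= k.
Hypothesis hp : primitive_poly (trinomial k).
Let D := 2 ^ k.
Let V := Vk k.
Let S := dollar V.
Let n := size S.
Let wins := [seq take k (drop i V) | i <- iota 0 D].

Lemma kD' : k.+1 < D.
Proof. exact: D_gt. Qed.

Lemma sizeV : size V = D + k.-1.
Proof. exact: size_V. Qed.

Lemma size_wins : size wins = D.
Proof. by rewrite size_map size_iota. Qed.

Lemma mem_wins z : size z = k -> z \in wins.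
Proof. by move=> sz; rewrite /wins V_wins //; apply: U_all. Qed.

Lemma uniq_wins : uniq wins.
Proof.
apply: (leq_size_uniq (uniq_enumk k)).
  by move=> z; rewrite mem_enumk => /eqP; apply: mem_wins.
by rewrite size_wins size_enumk.
Qed.

Definition pos z := index z wins.

Lemma pos_lt z : size z = k -> pos z < D.
Proof. by move=> sz; rewrite -size_wins index_mem mem_wins. Qed.

Lemma win_pos z : size z = k -> take k (drop (pos z) V) = z.
Proof.
move=> sz; have := nth_index [::] (mem_wins sz); rewrite -/(pos z).
by rewrite (nth_map 0) ?size_iota ?pos_lt // nth_iota ?pos_lt.
Qed.

Lemma size_S : n = D + k.
Proof. rewrite /n /S /dollar size_rcons size_map sizeV; lia. Qed.

Lemma drop_S j : j <= size V -> drop j S = map sym (drop j V) ++ [:: 0].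
Proof.
move=> hj; rewrite /S /dollar -cats1 drop_cat size_map.
case: ltngtP hj => // h _; first by rewrite map_drop.
by rewrite h subnn drop0 drop_oversize // size_map h.
Qed.

Definition Fi i := if i < k then rot (n.-1 - i) S else rot (pos (bits k (i - k))) S.
Definition idx i := if i < k then n.-1 - i else pos (bits k (i - k)).

Lemma short_form l : l < k -> exists X, rot (n.-1 - l) S = nseq l 1 ++ 0 :: X.
Proof.
move=> hl; exists (take (n.-1 - l) S); rewrite /rot drop_S; last by rewrite size_S sizeV; lia.
have -> : n.-1 - l = (k.-1 - l) + D by rewrite size_S; lia.
rewrite -drop_drop V_drop // drop_nseq.
have -> : k.-1 - (k.-1 - l) = l by lia.
by rewrite map_nseq -catA.
Qed.

Lemma long_form z : size z = k -> exists X, rot (pos z) S = map sym z ++ X.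
Proof.
move=> sz; rewrite /rot drop_S; last by have := pos_lt sz; rewrite sizeV; lia.
rewrite -(cat_take_drop k (drop (pos z) V)) win_pos // map_cat -!catA.
by eexists.
Qed.

Lemma sorted_F : sorted lexle (map Fi (iota 0 (k + D))).
Proof.
apply: sorted_map_iota => i _ hi; rewrite /Fi.
case: (ltngtP i.+1 k) => h.
- have [X1 ->] := short_form (ltnW h).
  have [X2 ->] := short_form h.
  have -> : nseq i.+1 1 = nseq i 1 ++ [:: 1] by rewrite -addn1 nseqD.
  by rewrite -catA /=; apply: lexle_mid.
- have [X1 ->] := long_form (size_bits k (i - k)).
  have [X2 ->] := long_form (size_bits k (i.+1 - k)).
  apply: lexlt_cat; have -> : i.+1 - k = (i - k).+1 by lia.
  by apply: bits_lt; rewrite -/D; lia.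
- have -> : i.+1 - k = 0 by lia.
  have -> : i = k.-1 by lia.
  have hk : k.-1 < k by lia.
  have [X1 ->] := short_form hk.
  have [X2 ->] := long_form (size_bits k 0).
  have -> : bits k 0 = nseq k false.
    by elim: (k) => //= m ->; rewrite rcons_nseq.
  rewrite map_nseq; case: (k) k2 => // m _.
  have -> : nseq m.+1 1 = nseq m 1 ++ [:: 1] by rewrite -addn1 nseqD.
  by rewrite -catA /=; apply: lexle_mid.
Qed.

Lemma Fi_idx i : Fi i = rot (idx i) S.
Proof. by rewrite /Fi /idx; case: ifP. Qed.

Lemma idx_lt i : i < k + D -> idx i < n.
Proof.
rewrite /idx size_S; case: ifP => h hi; first by lia.
have := pos_lt (size_bits k (i - k)); lia.
Qed.

Lemma idx_inj : {in iota 0 (k + D) &, injective idx}.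
Proof.
move=> i j; rewrite !mem_iota !add0n /= => hi hj; rewrite /idx size_S.
have pb : forall m, m < D -> pos (bits k m) < D by move=> m _; apply: pos_lt; rewrite size_bits.
case: ifP => h1; case: ifP => h2.
- by lia.
- by have := pb (j - k) ltac:(lia); lia.
- by have := pb (i - k) ltac:(lia); lia.
move=> e.
have e2 : bits k (i - k) = bits k (j - k).
  by rewrite -(win_pos (size_bits k (i - k))) e win_pos // size_bits.
have := congr1 num e2; rewrite !num_bits -/D; lia.
Qed.

Lemma perm_idx : perm_eq (map idx (iota 0 (k + D))) (iota 0 n).
Proof.
have u1 : uniq (map idx (iota 0 (k + D))) by rewrite map_inj_in_uniq ?iota_uniq //; exact: idx_inj.
have sub : {subset map idx (iota 0 (k + D)) <= iota 0 n}.
  move=> x /mapP [i]; rewrite mem_iota add0n => /andP [_ hi] ->.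
  by rewrite mem_iota add0n idx_lt.
have sz : size (iota 0 n) <= size (map idx (iota 0 (k + D))).
  by rewrite size_map !size_iota size_S addnC.
have [_ eqm] := uniq_min_size u1 sub sz.
by apply: uniq_perm => //; exact: iota_uniq.
Qed.

Lemma sort_rots : sort lexle [seq rot i S | i <- iota 0 n] = map Fi (iota 0 (k + D)).
Proof.
apply: (sorted_eq lexle_trans lexle_anti (sort_sorted lexle_total _) sorted_F).
rewrite perm_sort (eq_map Fi_idx) (map_comp (rot^~ S) idx) perm_sym.
exact: perm_map perm_idx.
Qed.

Lemma bwt_eq : bwt S = map (fun i => last 0 (Fi i)) (iota 0 (k + D)).
Proof. by rewrite /bwt -/n sort_rots -map_comp. Qed.

Definition Tf i := if i < k then 2 else sym (Gi k (bits k (i - k))).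

Lemma count_mem_uniq (T : eqType) (E s : seq T) : uniq s -> count (mem E) s <= size E.
Proof.
move=> us; rewrite -size_filter; apply: uniq_leq_size; first exact: filter_uniq.
by move=> x; rewrite mem_filter => /andP [].
Qed.

Lemma last_long z : size z = k -> z != nseq k false -> z != nseq k true ->
  z != rcons (nseq k.-1 true) false -> last 0 (rot (pos z) S) = sym (Gi k z).
Proof.
move=> sz h0 h1 h2.
have p0 : 0 < pos z.
  rewrite lt0n; apply: contraNN h0 => /eqP p0.
  by rewrite -(win_pos sz) p0 drop0 /V V_take.
have pl := pos_lt sz.
rewrite last_rot; last by rewrite p0 /=; have := size_S; rewrite /n; lia.
rewrite /S /dollar nth_rcons size_map sizeV.
have -> : (pos z).-1 < D + k.-1 by lia.
rewrite (nth_map false) ?sizeV; last by lia.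
rewrite V_pred ?p0 ?pl // -/V win_pos // Gp_gen //.
Qed.

Lemma ham_bound : ham (bwt S) (map Tf (iota 0 (k + D))) <= k + 3.
Proof.
rewrite bwt_eq (ham_map 0) iotaD count_cat leq_add //.
  by rewrite (leq_trans (count_size _ _)) // size_iota.
rewrite add0n -{1}(addn0 k) (iotaDl k 0 D) count_map.
set E := [:: nseq k false; nseq k true; rcons (nseq k.-1 true) false].
apply: (@leq_trans (count (fun m => bits k m \in E) (iota 0 D))).
  apply: sub_count => m /=; rewrite /Fi /Tf ltnNge leq_addr /= addKn.
  apply: contraR; rewrite !inE !negb_or => /and3P [h0 h1 h2].
  by rewrite last_long // ?size_bits.
have := count_mem_uniq E (uniq_enumk k); rewrite /enumk count_map.
by apply: leq_trans; apply: eq_leq; apply: eq_count.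
Qed.

Definition hb m := ~~ (odd m./2 (+) odd m).

Lemma Gi_bits m : Gi k (bits k m) = hb m.
Proof.
rewrite /Gi /hb; case: (k) k2 => [|[|k']] // _ /=.
rewrite !nth_rcons !size_rcons size_bits ltnn eqxx ltnSn.
by rewrite ltnn eqxx.
Qed.

Lemma hb_step j : (hb j != hb j.+1) = odd j.+1.
Proof.
rewrite /hb -uphalfE uphalf_half !oddS oddD.
by case: (odd j); case: (odd j./2).
Qed.

Lemma sym_eq a b : (sym a == sym b) = (a == b).
Proof. by case: a; case: b. Qed.

Lemma cnt_odd X : count (fun j => odd j.+1) (iota 0 (2 * X)) = X.
Proof.
elim: X => [|X IH] //.
rewrite mulnS -addn2 addnC iotaD count_cat IH /= add0n.
rewrite add0n oddM /=; case: (odd X) => /=; lia.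
Qed.

Lemma runs_T : runs (map Tf (iota 0 (k + D))) = (2 ^ k.-1).+1.
Proof.
have hD : D = 2 * 2 ^ k.-1 by rewrite /D -expnS; case: (k) k2.
have D1 : 1 <= D by have := kD'; lia.
rewrite /runs size_map size_iota.
set T := map Tf (iota 0 (k + D)).
have nthT : forall i, i < k + D -> nth 0 T i = Tf i.
  by move=> i hi; rewrite (nth_map 0) ?size_iota // nth_iota.
have -> : k + D = k.+1 + D.-1 by lia.
rewrite iotaD count_cat add0n.
have -> : count (fun i => (i == 0) || (nth 0 T i.-1 != nth 0 T i)) (iota 0 k.+1) = 1.
  rewrite /=; apply/eqP; rewrite eqn_add2l -leqn0 leqNgt -has_count.
  apply/hasPn => i; rewrite mem_iota => /andP [i1 ik] /=.
  rewrite !nthT; try lia.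
  rewrite /Tf; have -> : i.-1 < k by lia.
  have i0 : (i == 0) = false by apply/eqP; lia.
  rewrite i0; case: ifP => // hik.
  have -> : i - k = 0 by lia.
  by rewrite Gi_bits.
rewrite -{1}(addn0 k.+1) (iotaDl k.+1 0) count_map.
have -> : count (preim (addn k.+1) (fun i => (i == 0) || (nth 0 T i.-1 != nth 0 T i))) (iota 0 D.-1)
        = count (fun j => odd j.+1) (iota 0 D.-1).
  apply: eq_in_count => j; rewrite mem_iota add0n => /andP [_ hj] /=.
  rewrite !nthT; try lia.
  rewrite /Tf ltnNge (_ : k <= (k.+1 + j).-1) /=; last by lia.
  rewrite ltnNge (_ : k <= k.+1 + j) /=; last by lia.
  have -> : (k.+1 + j).-1 - k = j by lia.
  have -> : k.+1 + j - k = j.+1 by lia.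
  by rewrite sym_eq !Gi_bits hb_step.
have := cnt_odd (2 ^ k.-1); rewrite -hD.
have -> : D = D.-1 + 1 by lia.
rewrite iotaD count_cat /= add0n.
have -> : D.-1 + 1 = D by lia.
have e : D.-1.+1 = D by lia.
have : odd D.-1.+1 = false by rewrite e hD oddM.
rewrite oddS; case: (odd D.-1) => //= _; lia.
Qed.

End BWT.

Lemma infix_td (T : eqType) (s : seq T) m i : infix (take m (drop i s)) s.
Proof.
by rewrite -{2}(cat_take_drop i s) -{2}(cat_take_drop m (drop i s)) infix_infix.
Qed.

Lemma suffix_drop_eq (T : eqType) (y t : seq T) : suffix y t -> y = drop (size t - size y) t.
Proof.
by case/suffixP => t' ->; rewrite size_cat addnK drop_size_cat.
Qed.

Lemma sym_inj : injective sym.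
Proof. by case; case. Qed.

Section Chi.
Variable k : nat.
Hypothesis k2 : 2 <= k.
Hypothesis hp : primitive_poly (trinomial k).
Let D := 2 ^ k.
Let V := Vk k.
Let v := dollar V.

Lemma size_v : size v = D + k.
Proof. rewrite /v /dollar size_rcons size_map size_V //; lia. Qed.

Lemma drop_v j : j <= size V -> drop j v = map sym (drop j V) ++ [:: 0].
Proof.
move=> hj; rewrite /v /dollar -cats1 drop_cat size_map.
case: ltngtP hj => // h _; first by rewrite map_drop.
by rewrite h subnn drop0 drop_oversize // size_map h.
Qed.

Lemma win_v z : size z = k -> take k (drop (pos k z) v) = map sym z.
Proof.
move=> sz; have pl := pos_lt k2 hp sz.
rewrite drop_v; last by rewrite size_V //; lia.
rewrite take_cat size_map; case: ifP => h; first by rewrite -map_take win_pos.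
have e : size (drop (pos k z) V) = k by rewrite size_drop size_V //; move: h; rewrite size_drop size_V //; lia.
rewrite e subnn take0 cats0; congr map.
by rewrite -[in RHS](win_pos k2 hp sz) take_oversize // e.
Qed.

Lemma nth_v i : i < size V -> nth 0 v i = sym (nth false V i).
Proof. by move=> hi; rewrite /v /dollar nth_rcons size_map hi (nth_map false). Qed.

Lemma card_suff (S : {set 'I_(size v)}) : suffixient S -> D <= #|S|.
Proof.
move=> hS.
pose lastk (j : 'I_(size v)) := drop (j.+1 - k) (take j.+1 v).
have key : forall z, size z = k -> map sym z \in [seq lastk j | j <- enum S].
  move=> z sz.
  have pl := pos_lt k2 hp sz.
  have hsub : map sym z \in substrings v.
    rewrite -win_v //; rewrite /substrings; apply: (allpairs_f (fun i l => take l (drop i v))); rewrite mem_iota size_v; lia.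
  have hre : right_extension v (map sym z).
    rewrite /right_extension size_map sz.
    have k0 : 0 < k by lia.
    rewrite k0 -win_v // infix_td andbT -/v win_v //.
    apply/existsP.
    pose x := take k.-1 z.
    have sx : size x = k.-1 by rewrite size_take sz; case: ifP => //; lia.
    have hz : forall b, size (rcons x b) = k by move=> b; rewrite size_rcons sx; lia.
    have ha : forall b, pos k (rcons x b) + k.-1 < size v.
      by move=> b; have := pos_lt k2 hp (hz b); rewrite size_v; lia.
    have nha : forall b, nth 0 v (pos k (rcons x b) + k.-1) = sym b.
      move=> b; rewrite nth_v; last by have := pos_lt k2 hp (hz b); rewrite size_V //; lia.
      have := win_pos k2 hp (hz b) => /(congr1 (fun s => nth false s k.-1)).
      by rewrite nth_take ?nth_drop; [rewrite nth_rcons sx ltnn eqxx => ->|lia].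
    exists (Ordinal (ha false)); apply/existsP; exists (Ordinal (ha true)) => /=.
    rewrite !nha /= -map_take -/x.
    have hi : forall b, infix (rcons (map sym x) (sym b)) v.
      by move=> b; rewrite -map_rcons -win_v ?hz // infix_td.
    by rewrite !hi.
  have := allP hS _ hsub; rewrite hre /= => /existsP [j /andP [jS hj]].
  apply/mapP; exists j; first by rewrite mem_enum.
  rewrite /lastk (suffix_drop_eq hj) size_take size_map sz.
  rewrite (_ : (if _ then _ else _) = j.+1) //; case: ifP => // /negbT; rewrite -leqNgt => h; apply/eqP; rewrite eqn_leq h; exact: (ltn_ord j).
have hu : uniq (map (map sym) (enumk k)).
  by rewrite map_inj_uniq ?uniq_enumk //; apply: inj_map sym_inj.
have := uniq_leq_size hu (s2 := [seq lastk j | j <- enum S]) _.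
rewrite size_map size_enumk size_map -cardE; apply.
by move=> y /mapP [z]; rewrite mem_enumk => /eqP sz ->; apply: key.
Qed.

Lemma chi_lb : D <= chi V.
Proof.
rewrite /chi -/v; apply: (big_ind (fun x => D <= x)).
- by rewrite size_v leq_addr.
- by move=> x y hx hy; rewrite leq_min hx hy.
- by move=> S hS; apply: card_suff.
Qed.

Lemma chi_ub : chi V <= D + k.
Proof.
rewrite /chi -/v -size_v; apply: (big_ind (fun x => x <= size v)) => //.
- by move=> x y hx _; rewrite geq_min hx.
- by move=> S _; rewrite (leq_trans (max_card _)) // card_ord.
Qed.

End Chi.

Lemma pow_sq k : 7 <= k -> k * k <= 2 ^ k.-1.
Proof.
elim: k => // k IH; rewrite leq_eqVlt => /orP [/eqP <- //|h].
have := IH h.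
have e : 2 ^ k = 2 * 2 ^ k.-1 by rewrite -expnS; congr expn; lia.
rewrite /= e; nia.
Qed.

Lemma r_bounds k : inP k ->
  (2 ^ k.-1).+1 <= r (Vk k) + 2 * (k + 3) /\ r (Vk k) <= (2 ^ k.-1).+1 + 2 * (k + 3).
Proof.
move=> [k2 hp]; rewrite /r.
set S := dollar (Vk k).
set T := map (Tf k) (iota 0 (k + 2 ^ k)).
have sz : size (bwt S) = size T by rewrite bwt_eq // !size_map.
have hb := ham_bound k2 hp.
have rT := runs_T k2.
split.
  have := runs_ham (esym sz); rewrite ham_sym // -/S -/T rT.
  move=> h; apply: (leq_trans h); rewrite leq_add2l leq_mul2l /=; exact: hb.
have := runs_ham sz; rewrite -/S -/T rT.
move=> h; apply: (leq_trans h); rewrite leq_add2l leq_mul2l /=; exact: hb.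
Qed.

Lemma chi_bounds k : inP k -> 2 ^ k <= chi (Vk k) <= 2 ^ k + k.
Proof. by move=> [k2 hp]; rewrite chi_lb // chi_ub. Qed.

Theorem theorem3 :
  forall eps : rat, (0 < eps)%R ->
  exists k0 : nat, forall k : nat, inP k -> k0 <= k ->
    (`| (chi (Vk k))%:R / (r (Vk k))%:R - 2 | < eps :> rat)%R.
Proof.
move=> eps ep.
set d := Num.Def.archi_bound (eps^-1).
have hd : (1 < eps * d%:R)%R.
  have ei : (0 < eps^-1)%R by rewrite invr_gt0.
  have := archi_boundP (ltW ei).
  by rewrite -/d -div1r ltr_pdivrMr // mulrC.
exists (7 * d + 20) => k hk hk0.
have [rl ru] := r_bounds hk.
have /andP [cl cu] := chi_bounds hk.
set R := r (Vk k) in rl ru *.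
set c := chi (Vk k) in cl cu *.
set X := 2 ^ k.-1 in rl ru.
have hD : 2 ^ k = 2 * X by rewrite /X -expnS; case: (k) hk0 => //; lia.
rewrite hD in cl cu.
have hX : k * k <= X by apply: pow_sq; lia.
have hkk : k * (7 * d + 20) <= k * k by rewrite leq_mul2l hk0 orbT.
have hR : (5 * k + 14) * d <= R by nia.
have R0 : 0 < R by nia.
have b1 : c <= 2 * R + (5 * k + 14) by lia.
have b2 : 2 * R <= c + (5 * k + 14) by lia.
have RP : (0 < R%:R :> rat)%R by rewrite ltr0n.
have key : ((5 * k + 14)%:R < eps * R%:R :> rat)%R.
  have B0 : (0 < (5 * k + 14)%:R :> rat)%R by rewrite ltr0n; lia.
  apply: (@lt_le_trans _ _ (eps * ((5 * k + 14) * d)%:R)%R).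
    by rewrite natrM mulrC -mulrA ltr_pMr // mulrC.
  by apply: ler_wpM2l; [exact: ltW | rewrite ler_nat].
have -> : ((c%:R / R%:R - 2) = (c%:R - 2 * R%:R) / R%:R :> rat)%R.
  by rewrite mulrBl -mulrA divff ?mulr1 // gt_eqF.
rewrite normrM [`|_^-1|%R]gtr0_norm ?invr_gt0 // ltr_pdivrMr //.
rewrite ltr_norml; set y := (eps * R%:R)%R in key *.
have b1' : (c%:R <= 2 * R%:R + (5 * k + 14)%:R :> rat)%R.
  by rewrite -natrM -natrD ler_nat.
have b2' : (2 * R%:R <= c%:R + (5 * k + 14)%:R :> rat)%R.
  by rewrite -natrM -natrD ler_nat.
apply/andP; split; lra.
Qed.
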